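(* Let $\phi\in\Phi$, $f:\mathbb{R}^{n_1\times n_2}\to(-\infty,+\infty]$ proper lsc, $\Omega\subseteq\mathbb{R}^{n_1\times n_2}$ closed ($n_1\le n_2$), $\delta>0$, and suppose $\min_X\{\mathrm{rank}(X): f(X)\le\delta,\ X\in\Omega\}$ has a nonempty global optimal solution set. Consider $$\textstyle (Q)\ \min_{X,W\in\mathbb{R}^{n_1\times n_2}}\Big\{\sum_{i=1}^{n_1}\phi(\sigma_i(W)):\ \|X\|_*-\langle W,X\rangle=0,\ \|W\|\le1,\ X\in\Omega,\ f(X)\le\delta\Big\}.$$ If $X^*=U^*[\mathrm{Diag}(\sigma(X^* ))\ \ 0](V^* )^T$ (an SVD) is globally optimal for the rank minimization problem, then $(X^*,\,U_1^*(V_1^* )^T+t^*U_2^*[\mathrm{Diag}(e)\ \ 0](V_2^* )^T)$ is globally optimal for $(Q)$; conversely, if $(X^*,W^* )$ is globally optimal for $(Q)$, then $X^*$ is globally optimal for the rank minimization problem.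
   Context: $\Phi$ is the family of proper lsc functions $\phi:\mathbb{R}\to(-\infty,+\infty]$ with $\mathrm{int}(\mathrm{dom}\,\phi)\supseteq[0,1]$, convex on $[0,1]$, such that $\min_{t\in[0,1]}\phi(t)=0$ is attained at a (fixed) point $t^*\in[0,1)$, and $\phi(1)=1$. $\sigma(X)\in\mathbb{R}^{n_1}$ is the vector of singular values in nonincreasing order; $\|X\|_*$ nuclear norm, $\|X\|$ spectral norm, $\langle\cdot,\cdot\rangle$ trace inner product. For $X$ with SVD $U[\mathrm{Diag}(\sigma(X))\ 0]V^T$ and $r=\mathrm{rank}(X)$, $U_1,V_1$ are the first $r$ columns of $U,V$, and $U_2,V_2$ are the last $n_1-r$ and $n_2-r$ columns of $U,V$ respectively; $e$ is the all-ones vector of length $n_1-r$. *)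

(* Defs.v *)
(* Real numbers are modelled by an arbitrary real closed
   field R : rcfType. *)
From HB Require Import structures.
From mathcomp Require Import all_boot all_order all_algebra.
From Stdlib Require Import ClassicalEpsilon.
Set Implicit Arguments. Unset Strict Implicit. Unset Printing Implicit Defensive.
Import Order.TTheory GRing.Theory Num.Theory.
Local Open Scope ring_scope.

(* Extended reals (-oo, +oo] : [Some x] is the real x, [None] is +oo. *)
Definition ereal (R : Type) := option R.
Definition pinf {R : Type} : ereal R := None.

Definition ele {R : rcfType} (a b : ereal R) : Prop :=
  match a, b with
  | Some x, Some y => x <= y
  | _, None => True
  | None, Some _ => False
  end.

Definition eadd {R : rcfType} (a b : ereal R) : ereal R :=
  match a, b with
  | Some x, Some y => Some (x + y)
  | _, _ => None
  end.

Definition rlt_e {R : rcfType} (a : R) (b : ereal R) : Prop :=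
  match b with Some y => a < y | None => True end.

Definition proper_fun {T} {R : rcfType} (g : T -> ereal R) : Prop :=
  exists x, g x <> None.

Definition lsc_R {R : rcfType} (g : R -> ereal R) : Prop :=
  forall x (a : R), rlt_e a (g x) ->
    exists eps : R, 0 < eps /\ forall y, `|y - x| < eps -> rlt_e a (g y).

Definition unit_interval_in_int_dom {R : rcfType} (g : R -> ereal R) : Prop :=
  forall t : R, 0 <= t <= 1 ->
    exists eps : R, 0 < eps /\ forall s, `|s - t| < eps -> g s <> None.

Definition convex_on_unit {R : rcfType} (g : R -> ereal R) : Prop :=
  forall (t s lam : R), 0 <= t <= 1 -> 0 <= s <= 1 -> 0 <= lam <= 1 ->
    forall gt gs, g t = Some gt -> g s = Some gs ->
      ele (g (lam * t + (1 - lam) * s)) (Some (lam * gt + (1 - lam) * gs)).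

Definition in_Phi {R : rcfType} (tstar : R) (phi : R -> ereal R) : Prop :=
  [/\ proper_fun phi, lsc_R phi, unit_interval_in_int_dom phi
    & convex_on_unit phi] /\
  [/\ 0 <= tstar < 1, phi tstar = Some 0,
      (forall t : R, 0 <= t <= 1 -> ele (Some 0) (phi t))
    & phi 1 = Some 1].

Definition mx_near {R : rcfType} {n1 n2 : nat} (eps : R) (X Y : 'M[R]_(n1, n2)) :=
  forall i j, `|Y i j - X i j| < eps.

Definition lsc_mx {R : rcfType} {n1 n2 : nat} (g : 'M[R]_(n1, n2) -> ereal R) : Prop :=
  forall X (a : R), rlt_e a (g X) ->
    exists eps : R, 0 < eps /\ forall Y, mx_near eps X Y -> rlt_e a (g Y).

Definition closed_mx {R : rcfType} {n1 n2 : nat} (Om : 'M[R]_(n1, n2) -> Prop) : Prop :=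
  forall X, ~ Om X -> exists eps : R, 0 < eps /\ forall Y, mx_near eps X Y -> ~ Om Y.

Definition orthogonal_mx {R : rcfType} {n : nat} (U : 'M[R]_n) : Prop :=
  U *m U^T = 1%:M.

Definition rdiag {R : rcfType} {n1 n2 : nat} (s : 'rV[R]_n1) : 'M[R]_(n1, n2) :=
  \matrix_(i < n1, j < n2) (if (i : nat) == (j : nat) then s 0 i else 0).

Definition is_svd {R : rcfType} {n1 n2 : nat} (X : 'M[R]_(n1, n2))
    (U : 'M[R]_n1) (s : 'rV[R]_n1) (V : 'M[R]_n2) : Prop :=
  [/\ orthogonal_mx U, orthogonal_mx V,
      (forall i : 'I_n1, 0 <= s 0 i),
      (forall i j : 'I_n1, (i <= j)%N -> s 0 j <= s 0 i)
    & X = U *m rdiag s *m V^T].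

Definition sigma {R : rcfType} {n1 n2 : nat} (X : 'M[R]_(n1, n2)) : 'rV[R]_n1 :=
  epsilon (inhabits 0) (fun s => exists U V, is_svd X U s V).

Definition nucnorm {R : rcfType} {n1 n2 : nat} (X : 'M[R]_(n1, n2)) : R :=
  \sum_(i < n1) sigma X 0 i.

Definition specnorm {R : rcfType} {n1 n2 : nat} (X : 'M[R]_(n1, n2)) : R :=
  \big[Num.max/0]_(i < n1) sigma X 0 i.

Definition trinner {R : rcfType} {n1 n2 : nat} (W X : 'M[R]_(n1, n2)) : R :=
  \tr (W^T *m X).

Definition rank_feasible {R : rcfType} {n1 n2 : nat}
    (f : 'M[R]_(n1, n2) -> ereal R) (Om : 'M[R]_(n1, n2) -> Prop) (delta : R)
    (X : 'M[R]_(n1, n2)) : Prop :=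
  ele (f X) (Some delta) /\ Om X.

Definition rank_optimal {R : rcfType} {n1 n2 : nat}
    (f : 'M[R]_(n1, n2) -> ereal R) (Om : 'M[R]_(n1, n2) -> Prop) (delta : R)
    (X : 'M[R]_(n1, n2)) : Prop :=
  rank_feasible f Om delta X /\
  forall Y, rank_feasible f Om delta Y -> (\rank X <= \rank Y)%N.

Definition Q_obj {R : rcfType} {n1 n2 : nat} (phi : R -> ereal R)
    (W : 'M[R]_(n1, n2)) : ereal R :=
  foldr eadd (Some 0) [seq phi (sigma W 0 i) | i <- enum 'I_n1].

Definition Q_feasible {R : rcfType} {n1 n2 : nat}
    (f : 'M[R]_(n1, n2) -> ereal R) (Om : 'M[R]_(n1, n2) -> Prop) (delta : R)
    (X W : 'M[R]_(n1, n2)) : Prop :=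
  [/\ nucnorm X - trinner W X = 0, specnorm W <= 1, Om X & ele (f X) (Some delta)].

Definition Q_optimal {R : rcfType} {n1 n2 : nat} (phi : R -> ereal R)
    (f : 'M[R]_(n1, n2) -> ereal R) (Om : 'M[R]_(n1, n2) -> Prop) (delta : R)
    (X W : 'M[R]_(n1, n2)) : Prop :=
  Q_feasible f Om delta X W /\
  forall X' W', Q_feasible f Om delta X' W' -> ele (Q_obj phi W) (Q_obj phi W').

(* U_1 V_1^T + t U_2 [Diag(e) 0] V_2^T  (with U_1,V_1 the first r columns,
   U_2,V_2 the remaining ones), written as the equal block product
   U [Diag(1,..,1,t,..,t) 0] V^T with r ones. *)
Definition Wstar {R : rcfType} {n1 n2 : nat} (U : 'M[R]_n1) (V : 'M[R]_n2)
    (r : nat) (t : R) : 'M[R]_(n1, n2) :=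
  U *m rdiag (\row_(i < n1) (if (i < r)%N then 1 else t)) *m V^T.

(* Main.v *)
Require Import Defs.
From HB Require Import structures.
From mathcomp Require Import all_boot all_order all_algebra.
From mathcomp Require Import ring lra.
From mathcomp Require Import polyrcf complex.
From Stdlib Require Import ClassicalEpsilon.
Import Order.TTheory GRing.Theory Num.Theory.
Local Open Scope ring_scope.
Set Implicit Arguments. Unset Strict Implicit. Unset Printing Implicit Defensive.


Section Basics.
Variable R : rcfType.

Definition nrm2 {n} (v : 'rV[R]_n) : R := (v *m v^T) 0 0.

Lemma nrm2E n (v : 'rV[R]_n) : nrm2 v = \sum_i v 0 i ^+ 2.
Proof. by rewrite /nrm2 mxE; apply: eq_bigr => i _; rewrite mxE expr2. Qed.

Lemma nrm2_ge0 n (v : 'rV[R]_n) : 0 <= nrm2 v.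
Proof. by rewrite nrm2E sumr_ge0 // => i _; rewrite sqr_ge0. Qed.

Lemma nrm2_eq0 n (v : 'rV[R]_n) : nrm2 v = 0 -> v = 0.
Proof.
rewrite nrm2E => /eqP; rewrite psumr_eq0 => [/allP H|i _]; last by rewrite sqr_ge0.
apply/rowP => i; rewrite mxE; apply/eqP; rewrite -sqrf_eq0.
by apply: (implyP (H i (mem_index_enum _))).
Qed.

Lemma orthoT n (U : 'M[R]_n) : U *m U^T = 1%:M -> U^T *m U = 1%:M.
Proof. exact: mulmx1C. Qed.

Lemma ortho_unit n (U : 'M[R]_n) : U *m U^T = 1%:M -> U \in unitmx.
Proof. by move=> H; case: (mulmx1_unit H). Qed.

Lemma orthoM n (U V : 'M[R]_n) : U *m U^T = 1%:M -> V *m V^T = 1%:M ->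
  (U *m V) *m (U *m V)^T = 1%:M.
Proof.
by move=> HU HV; rewrite trmx_mul mulmxA -(mulmxA U) HV mulmx1 HU.
Qed.

Lemma orthoTT n (U : 'M[R]_n) : U *m U^T = 1%:M -> U^T *m U^T^T = 1%:M.
Proof. by rewrite trmxK; apply: mulmx1C. Qed.

Lemma householder n (q : 'rV[R]_n.+1) : nrm2 q = 1 ->
  exists H : 'M[R]_n.+1, [/\ H *m H^T = 1%:M, H^T = H & row 0 H = q].
Proof.
move=> q1.
pose e0 : 'rV[R]_n.+1 := delta_mx 0 0.
pose w := e0 - q.
have wE : w = e0 - q by [].
clearbody w.
pose c := nrm2 w.
pose k := 2 / c.
pose H : 'M[R]_n.+1 := 1%:M - k *: (w^T *m w).
have HT : H^T = H by rewrite /H linearB /= trmx1 linearZ /= trmx_mul trmxK.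
have ww : w *m w^T = c%:M by rewrite [LHS]mx11_scalar.
have kc : k * k * c = 2 * k.
  rewrite /k; have [->|c0] := eqVneq c 0; first by rewrite invr0 !mulr0.
  by field.
exists H; split => //.
- rewrite HT /H.
  have PP : (w^T *m w) *m (w^T *m w) = c *: (w^T *m w).
    by rewrite mulmxA -(mulmxA _ w) ww mul_mx_scalar -scalemxAl.
  rewrite mulmxBl mul1mx mulmxBr mulmx1 -scalemxAl -scalemxAr PP !scalerA.
  apply/matrixP => i j; rewrite !mxE kc; ring.
- have e0v (v : 'rV[R]_n.+1) : e0 *m v^T = (v 0 0)%:M.
    rewrite -rowE; apply/matrixP => i j; rewrite !mxE !ord1 eqxx mulr1n.
    by [].
  have e00 : e0 0 0 = 1 by rewrite mxE eqxx.
  have cE : c = 2 * (1 - q 0 0).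
    have qe : q *m e0^T = (q 0 0)%:M.
      by rewrite -[q *m _]trmxK trmx_mul trmxK e0v tr_scalar_mx.
    rewrite /c /nrm2 wE linearB /= mulmxBl !mulmxBr e0v e0v qe.
    rewrite !mxE eqxx /= !mulr1n; move: q1; rewrite /nrm2 mxE => ->; ring.
  rewrite rowE /H mulmxBr mulmx1 -scalemxAr mulmxA.
  have e0w : e0 *m w^T = (1 - q 0 0)%:M by rewrite e0v wE !mxE eqxx.
  rewrite e0w mul_scalar_mx scalerA.
  have [c0|c0] := eqVneq c 0.
    have w0 : w = 0 by apply: nrm2_eq0.
    by move: wE; rewrite w0 scaler0 subr0 => /eqP; rewrite eq_sym subr_eq0 => /eqP.
  have hq : 1 - q 0 0 != 0 by move: c0; rewrite cE mulf_eq0 negb_or => /andP[].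
  have -> : k * (1 - q 0 0) = 1 by rewrite /k cE; field.
  by rewrite scale1r wE opprB addrC subrK.
Qed.
End Basics.


Section Eig.
Variable R : rcfType.

Lemma sym_eig n (A : 'M[R]_n.+1) : A^T = A -> exists a, eigenvalue A a.
Proof.
move=> AT.
pose f := real_complex R.
pose Ac := map_mx f A.
have Asym : Ac \is symmetricmx.
  apply/is_hermitianmxP; rewrite expr0 scale1r map_mx_id // /Ac map_trmx AT //.
have Areal : Ac \is a mxOver Num.real.
  by apply/mxOverP => i j; rewrite mxE /f /= complex_real.
have Aherm := realsym_hermsym Asym Areal.
have dreal := hermitian_spectral_diag_real Aherm.
have /orthomx_spectralP AE := hermitian_normalmx Aherm.
set P := spectralmx Ac in AE.
set d := spectral_diag Ac in AE dreal.
have Pu : P \in unitmx by apply: spectral_unit.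
have eigd : eigenvalue Ac (d 0 0).
  apply/eigenvalueP; exists (row 0 P).
    rewrite [in LHS]AE rowE !mulmxA -(mulmxA _ P (invmx P)) mulmxV // mulmx1.
    by rewrite -(rowE 0 (diag_mx d)) row_diag_mx -scalemxAl.
  rewrite rowE mulmx_free_eq0 ?row_free_unit //.
  apply/eqP => /matrixP /(_ 0 0); rewrite !mxE eqxx /=.
  by move/eqP; rewrite oner_eq0.
have /complex_realP [k dk] : d 0 0 \is Num.real by move/mxOverP : dreal => /(_ 0 0).
by exists k; rewrite -(eigenvalue_map (real_complex R)); move: eigd; rewrite dk.
Qed.

Lemma seq_max (s : seq R) a : a \in s -> exists2 m, m \in s & forall y, y \in s -> y <= m.
Proof.
elim: s a => [//|x s IH] a _.
case: s IH => [|y s] IH.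
  by exists x; rewrite ?mem_head // => z; rewrite inE => /eqP ->.
have [m ms mM] := IH y (mem_head _ _).
have [xm|mx] := leP x m.
  exists m; first by rewrite inE ms orbT.
  by move=> z; rewrite inE => /orP [/eqP ->|/mM].
exists x; first exact: mem_head.
move=> z; rewrite inE => /orP [/eqP -> //|/mM zm]; exact: (le_trans zm (ltW mx)).
Qed.

Lemma max_eig n (A : 'M[R]_n.+1) : A^T = A ->
  exists m, eigenvalue A m /\ forall x, eigenvalue A x -> x <= m.
Proof.
move=> AT; have [a ea] := sym_eig AT.
have p0 : char_poly A != 0 by apply: monic_neq0; apply: char_poly_monic.
have rE x : eigenvalue A x = (x \in rootsR (char_poly A)).
  by rewrite eigenvalue_root_char -(roots_on_rootsR p0 x) in_itv /=.
have [m ms mM] := @seq_max (rootsR (char_poly A)) a (ltac:(by rewrite -rE)).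
by exists m; split; [rewrite rE | move=> x; rewrite rE; apply: mM].
Qed.
End Eig.


Section Spec.
Variable R : rcfType.

Lemma nrm2Z n (a : R) (v : 'rV[R]_n) : nrm2 (a *: v) = a ^+ 2 * nrm2 v.
Proof. by rewrite /nrm2 linearZ /= -scalemxAl -scalemxAr scalerA !mxE expr2. Qed.

Lemma normalize n (v : 'rV[R]_n) : v != 0 ->
  exists2 a : R, 0 < a & nrm2 (a *: v) = 1.
Proof.
move=> v0.
have nv : 0 < nrm2 v.
  rewrite lt_def nrm2_ge0 andbT; apply/eqP => /nrm2_eq0 h; by rewrite h eqxx in v0.
exists (Num.sqrt (nrm2 v))^-1; first by rewrite invr_gt0 sqrtr_gt0.
by rewrite nrm2Z exprVn sqr_sqrtr ?ltW // mulVf // gt_eqF.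
Qed.

Lemma eig_unit n (A : 'M[R]_n) (U : 'M[R]_n) (v : 'rV[R]_n) a :
  U \in unitmx -> v != 0 -> v *m A = a *: v ->
  eigenvalue (invmx U *m A *m U) a.
Proof.
move=> Uu v0 vA; apply/eigenvalueP; exists (v *m U).
  by rewrite !mulmxA mulmxK // vA -scalemxAl.
by rewrite mulmx_free_eq0 ?row_free_unit.
Qed.

Lemma flat0 (A B : 'M[R]_(0, 0)) : A = B.
Proof. by apply/matrixP => [[]]. Qed.

Lemma spectral n (A : 'M[R]_n) : A^T = A ->
  exists (Q : 'M[R]_n) (d : 'rV[R]_n),
    [/\ Q *m Q^T = 1%:M, (forall i j : 'I_n, (i <= j)%N -> d 0 j <= d 0 i)
      & A = Q^T *m diag_mx d *m Q].
Proof.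
elim: n A => [|n IH] A AT.
  exists 1%:M, 0; split; [exact: flat0 | by move=> [] | exact: flat0].
have [m [em mM]] := max_eig AT.
have [v vA v0] := eigenvalueP em.
have [a a0 qn] := normalize v0.
set q := a *: v in qn.
have qA : q *m A = m *: q by rewrite /q -scalemxAl vA !scalerA mulrC.
have [H [HH HT H0]] := householder qn.
have HTH : H^T *m H = 1%:M by apply: mulmx1C.
pose B : 'M[R]_(1 + n) := H *m A *m H^T.
have BT : B^T = B by rewrite /B !trmx_mul trmxK AT mulmxA.
have row0B : row 0 B = m *: 'e_0.
  rewrite /B rowE !mulmxA -rowE H0 qA -scalemxAl -H0 rowE -mulmxA HH mulmx1 //.
have AE : A = H^T *m B *m H.
  by rewrite /B !mulmxA HTH mul1mx -mulmxA HTH mulmx1.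
clearbody B.
have B0j j : B 0 j = m * ('e_0 : 'rV[R]_(1 + n)) 0 j.
  by have /rowP /(_ j) := row0B; rewrite !mxE.
have l0 : lshift n (0 : 'I_1) = 0 :> 'I_(1 + n) by apply: val_inj.
have ur0 : ursubmx B = 0.
  by apply/matrixP => i j; rewrite !mxE ord1 l0 B0j !mxE /= mulr0.
have dl0 : dlsubmx B = 0.
  apply/matrixP => i j; rewrite !mxE ord1 l0 -BT !mxE B0j !mxE /=.
  by rewrite ?mulr0.
have ul0 : ulsubmx B = m%:M.
  by apply/matrixP => i j; rewrite !mxE !ord1 l0 B0j !mxE /= ?eqxx /= ?mulr1n ?mulr1.
pose A' := drsubmx B.
have A'T : A'^T = A'.
  by apply/matrixP => i j; rewrite !mxE -[in LHS]BT mxE.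
have [Q' [d' [HQ' d'S A'E]]] := IH A' A'T.
pose K : 'M[R]_(1 + n) := block_mx 1%:M 0 0 Q'.
pose D : 'M[R]_(1 + n) := block_mx m%:M 0 0 (diag_mx d').
have BE : B = K^T *m D *m K.
  rewrite -[LHS]submxK ur0 dl0 ul0 -/A' A'E /K /D. rewrite (tr_block_mx (1%:M : 'M[R]_1)).
  rewrite !trmx0 tr_scalar_mx !mulmx_block !(mulmx0, mul0mx, mulmx1, mul1mx, addr0, add0r).
  done.
exists (K *m H); exists (row_mx (m%:M : 'rV[R]_1) d'); split.
- apply: orthoM => //.
  have KK : (K *m K^T : 'M[R]_(1 + n)) = 1%:M.
    rewrite /K (tr_block_mx (1%:M : 'M[R]_1)) !trmx0 tr_scalar_mx mulmx_block.
    rewrite !(mulmx0, mul0mx, mulmx1, mul1mx, addr0, add0r) HQ'.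
    by rewrite -scalar_mx_block.
  exact: KK.
- have Bblk : B = block_mx m%:M 0 0 A' by rewrite -[LHS]submxK ur0 dl0 ul0.
  have iH : invmx H = H^T.
    by rewrite -[LHS]mul1mx -HTH -mulmxA mulmxV ?mulmx1 // (ortho_unit HH).
  have d'm k : d' 0 k <= m.
    apply: mM.
    pose w := row k Q'.
    have wA' : w *m A' = d' 0 k *: w.
      rewrite /w A'E rowE !mulmxA -(mulmxA _ Q' Q'^T) HQ' mulmx1.
      by rewrite -(rowE k (diag_mx d')) row_diag_mx -scalemxAl.
    have w0 : w != 0.
      rewrite /w rowE mulmx_free_eq0 ?row_free_unit ?(ortho_unit HQ') //.
      apply/eqP => /matrixP /(_ 0 k); rewrite !mxE !eqxx /=.
      by move/eqP; rewrite oner_eq0.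
    pose u : 'rV[R]_(1 + n) := row_mx 0 w.
    have uB : u *m B = d' 0 k *: u.
      rewrite Bblk /u mul_row_block !(mulmx0, mul0mx, addr0, add0r) wA'.
      by rewrite scale_row_mx scaler0.
    have u0 : u != 0 by rewrite /u row_mx_eq0 negb_and w0 orbT.
    have := eig_unit (ortho_unit HH) u0 uB.
    by rewrite iH -AE.
  move=> i j ij; rewrite !mxE.
  case: splitP => [j1 /= hj|j2 /= hj]; case: splitP => [i1 /= hi|i2 /= hi].
  + by rewrite !ord1.
  + by move: ij; rewrite hi hj; case: j1 {hj} => [[]].
  + by rewrite ord1 mxE eqxx mulr1n d'm.
  + by apply: d'S; move: ij; rewrite hi hj.
- have DE : diag_mx (row_mx (m%:M : 'rV[R]_1) d') = D.
    rewrite diag_mx_row /D; congr (block_mx _ _ _ _).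
    by apply/matrixP => i j; rewrite !mxE !ord1 eqxx.
  by rewrite DE AE BE trmx_mul !mulmxA.
Qed.
End Spec.


Section SVD.
Variable R : rcfType.

Lemma rowrowT m n (Y : 'M[R]_(m, n)) i j :
  (row i Y *m (row j Y)^T) 0 0 = (Y *m Y^T) i j.
Proof. by rewrite !mxE; apply: eq_bigr => k _; rewrite !mxE. Qed.

Lemma rdiag_block m n (a : R) (s : 'rV[R]_m) :
  (rdiag (row_mx (a%:M : 'rV[R]_1) s) : 'M[R]_(1 + m, 1 + n))
    = block_mx a%:M 0 0 (rdiag s).
Proof.
apply/matrixP => i j; rewrite !mxE.
case: (splitP i) => [i1 hi|i2 hi]; rewrite !mxE; case: (splitP j) => [j1 hj|j2 hj];
  rewrite ?mxE hi hj ?ord1 //=.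
Qed.

Lemma mul_e_tr n (v : 'rV[R]_n) j : (v *m (delta_mx 0 j : 'rV[R]_n)^T) 0 0 = v 0 j.
Proof. by rewrite trmx_delta -colE mxE. Qed.

Lemma complete m : forall n (Y : 'M[R]_(m, n)) (s : 'rV[R]_m),
  (m <= n)%N -> (forall i, 0 <= s 0 i) ->
  (forall i j : 'I_m, (i <= j)%N -> s 0 j <= s 0 i) ->
  Y *m Y^T = diag_mx (\row_i (s 0 i ^+ 2)) ->
  exists M : 'M[R]_n, M *m M^T = 1%:M /\ Y = rdiag s *m M.
Proof.
elim: m => [|m IH] n Y s mn s0 sS YY.
  exists 1%:M; split; first by rewrite trmx1 mulmx1.
  by apply/matrixP => [[]].
case: n mn Y YY => [//|n'] mn Y YY.
have [z|pos] := eqVneq (s 0 0) 0.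
  have sz i : s 0 i = 0 by apply/le_anti; rewrite s0 andbT -z; apply: sS.
  have Y0 : Y = 0.
    apply/matrixP => i j; rewrite mxE.
    have := @nrm2_eq0 _ _ (row i Y); rewrite /nrm2 rowrowT YY !mxE eqxx sz.
    by move=> /(_ ltac:(by rewrite expr0n mulr1n)) /rowP /(_ j); rewrite !mxE.
  exists 1%:M; split; first by rewrite trmx1 mulmx1.
  rewrite mulmx1 Y0; apply/matrixP => i j; rewrite !mxE sz; by case: eqP.
have sp : 0 < s 0 0 by rewrite lt_def pos s0.
pose y0 := row 0 Y.
have ny0 : nrm2 y0 = s 0 0 ^+ 2 by rewrite /nrm2 rowrowT YY !mxE eqxx mulr1n.
pose q := (s 0 0)^-1 *: y0.
have qn : nrm2 q = 1 by rewrite nrm2Z ny0 exprVn mulVf // expf_neq0.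
have [H [HH HT H0]] := householder qn.
have HTH : H^T *m H = 1%:M by apply: mulmx1C.
pose Z : 'M[R]_(1 + m, 1 + n') := Y *m H^T.
have ZZ : Z *m Z^T = diag_mx (\row_i (s 0 i ^+ 2)).
  by rewrite /Z trmx_mul trmxK mulmxA -(mulmxA Y) HTH mulmx1 YY.
have row0Z : row 0 Z = s 0 0 *: 'e_0.
  have y0q : y0 = s 0 0 *: q by rewrite /q scalerA mulfV // scale1r.
  rewrite /Z rowE mulmxA -rowE -/y0 y0q -scalemxAl -H0 rowE -mulmxA HH mulmx1.
  by [].
have YE : Y = Z *m H by rewrite /Z -mulmxA HTH mulmx1.
clearbody Z.
have Z0j j : Z 0 j = s 0 0 * ('e_0 : 'rV[R]_(1 + n')) 0 j.
  by have /rowP /(_ j) := row0Z; rewrite !mxE.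
have l0 : lshift m (0 : 'I_1) = 0 :> 'I_(1 + m) by apply: val_inj.
have l0' : lshift n' (0 : 'I_1) = 0 :> 'I_(1 + n') by apply: val_inj.
have Zi0 (i : 'I_m) : Z (rshift 1 i) 0 = 0.
  have := rowrowT Z (rshift 1 i) 0; rewrite ZZ row0Z linearZ /= -scalemxAr mxE.
  rewrite mul_e_tr !mxE /= mulr0n => /eqP; rewrite mulf_eq0 (negbTE pos) /=.
  by move/eqP.
have ur0 : ursubmx Z = 0.
  by apply/matrixP => i j; rewrite !mxE ord1 l0 Z0j !mxE /= mulr0.
have dl0 : dlsubmx Z = 0.
  by apply/matrixP => i j; rewrite !mxE ord1 l0' Zi0.
have ul0 : ulsubmx Z = (s 0 0)%:M.
  by apply/matrixP => i j; rewrite !mxE !ord1 l0 l0' Z0j !mxE /= ?mulr1.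
pose Z' := drsubmx Z.
have Zblk : Z = block_mx (s 0 0)%:M 0 0 Z' by rewrite -[LHS]submxK ur0 dl0 ul0.
pose s' : 'rV[R]_m := rsubmx (s : 'rV[R]_(1 + m)).
have s'E i : s' 0 i = s 0 (rshift 1 i) by rewrite mxE.
have Z'Z' : Z' *m Z'^T = diag_mx (\row_i (s' 0 i ^+ 2)).
  have := congr1 drsubmx ZZ.
  rewrite [in X in X -> _]Zblk (tr_block_mx ((s 0 0)%:M : 'M[R]_1)) !trmx0.
  rewrite mulmx_block !(mulmx0, mul0mx, addr0, add0r) block_mxKdr => ->.
  by apply/matrixP => i j; rewrite !mxE -val_eqE /= eqn_add2l val_eqE.
have [M' [HM' Z'E]] := IH n' Z' s' mn (fun i => ltac:(by rewrite s'E))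
  (fun i j ij => ltac:(by rewrite !s'E; apply: sS; rewrite /= leq_add2l)) Z'Z'.
pose K : 'M[R]_(1 + n') := block_mx 1%:M 0 0 M'.
exists (K *m H); split.
  apply: orthoM => //.
  have KK : (K *m K^T : 'M[R]_(1 + n')) = 1%:M.
    rewrite /K (tr_block_mx (1%:M : 'M[R]_1)) !trmx0 tr_scalar_mx mulmx_block.
    rewrite !(mulmx0, mul0mx, mulmx1, mul1mx, addr0, add0r) HM'.
    by rewrite -scalar_mx_block.
  exact: KK.
have sE : s = row_mx ((s 0 0)%:M : 'rV[R]_1) s' :> 'rV[R]_(1 + m).
  rewrite -[LHS](hsubmxK (s : 'rV[R]_(1 + m))); congr (row_mx _ _).
  by apply/matrixP => i j; rewrite !mxE !ord1 l0 eqxx mulr1n.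
have fin : (Y : 'M[R]_(1 + m, 1 + n')) =
    rdiag (row_mx ((s 0 0)%:M : 'rV[R]_1) s') *m (K *m H).
  rewrite rdiag_block YE Zblk Z'E mulmxA /K mulmx_block.
  by rewrite !(mulmx0, mul0mx, mulmx1, mul1mx, addr0, add0r).
by rewrite sE; exact: fin.
Qed.

Lemma svd_exists n1 n2 (X : 'M[R]_(n1, n2)) : (n1 <= n2)%N ->
  exists U s V, is_svd X U s V.
Proof.
move=> le.
have ST : (X *m X^T)^T = X *m X^T by rewrite trmx_mul trmxK.
have [Q [d [HQ dS XE]]] := spectral ST.
pose Y := Q *m X.
have YY : Y *m Y^T = diag_mx d.
  rewrite /Y trmx_mul -mulmxA (mulmxA X) XE !mulmxA HQ mul1mx -mulmxA HQ.
  by rewrite mulmx1.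
have d0 i : 0 <= d 0 i.
  have := rowrowT Y i i; rewrite YY [diag_mx d i i]mxE eqxx mulr1n => <-; exact: nrm2_ge0.
pose s : 'rV[R]_n1 := \row_i Num.sqrt (d 0 i).
have ss : \row_i (s 0 i ^+ 2) = d by apply/rowP => i; rewrite !mxE sqr_sqrtr.
have [M [HM YE]] := @complete _ _ Y s le (fun i => ltac:(by rewrite mxE sqrtr_ge0))
  (fun i' j' ij => ltac:(by rewrite !mxE ler_sqrt // dS)) (ltac:(by rewrite ss)).
exists Q^T, s, M^T; split.
- exact: orthoTT.
- exact: orthoTT.
- by move=> i; rewrite mxE sqrtr_ge0.
- by move=> i j ij; rewrite !mxE ler_sqrt // dS.
- by rewrite trmxK -mulmxA -YE /Y mulmxA (mulmx1C HQ) mul1mx.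
Qed.

Lemma sigma_svd n1 n2 (X : 'M[R]_(n1, n2)) : (n1 <= n2)%N ->
  exists U V, is_svd X U (sigma X) V.
Proof.
move=> le.
have ex : exists s, exists U V, is_svd X U s V.
  by have [U [s [V h]]] := svd_exists X le; exists s, U, V.
exact: (ClassicalEpsilon.epsilon_spec (inhabits 0) _ ex).
Qed.
End SVD.


Section Uniq.
Variable R : rcfType.

Lemma rdiag_mulT n1 n2 (le : (n1 <= n2)%N) (s t : 'rV[R]_n1) :
  (rdiag s : 'M[R]_(n1, n2)) *m (rdiag t)^T = diag_mx (\row_i (s 0 i * t 0 i)).
Proof.
apply/matrixP => i j; rewrite !mxE (bigD1 (widen_ord le i)) //= big1.
  rewrite !mxE /= eqxx addr0; case: eqP => [/val_inj ->|ij]; first by rewrite eqxx mulr1n.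
  rewrite mulr0; case: eqP => // ji; by case: ij; rewrite ji.
move=> k ki; rewrite !mxE; case: eqP => [ik|]; last by rewrite mul0r.
by exfalso; move/negP: ki; apply; apply/eqP/val_inj; rewrite /= ik.
Qed.

Lemma char_poly_orth n (U : 'M[R]_n) (D : 'M[R]_n) : U *m U^T = 1%:M ->
  char_poly (U *m D *m U^T) = char_poly D.
Proof.
move=> HU; rewrite /char_poly /char_poly_mx.
set Up := map_mx polyC U; set UTp := map_mx polyC U^T.
have UU : Up *m UTp = 1%:M by rewrite -map_mxM HU map_scalar_mx.
have -> : 'X%:M - map_mx polyC (U *m D *m U^T)
    = Up *m ('X%:M - map_mx polyC D) *m UTp.
  rewrite mulmxBr mulmxBl !map_mxM -/Up -/UTp; congr (_ - _).
  by rewrite scalar_mxC -mulmxA UU mulmx1.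
by rewrite !det_mulmx mulrC mulrA -det_mulmx mulmx1C // det1 mul1r.
Qed.

Lemma sorted_row n (f : 'I_n -> R) :
  (forall i j : 'I_n, (i <= j)%N -> f j <= f i) ->
  sorted (fun x y => y <= x) [seq f i | i <- enum 'I_n].
Proof.
move=> fS; rewrite sorted_pairwise; last by move=> x y z yx zy; exact: le_trans zy yx.
rewrite pairwise_map.
have : pairwise (fun i j : 'I_n => (i < j)%N) (enum 'I_n).
  rewrite -(pairwise_map val (fun a b => a < b)%N) val_enum_ord.
  by rewrite -sorted_pairwise ?iota_ltn_sorted //; exact: ltn_trans.
by apply: sub_pairwise => i j /ltnW; apply: fS.
Qed.

Lemma svd_unique n1 n2 (le : (n1 <= n2)%N) (X : 'M[R]_(n1, n2)) U s V U' s' V' :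
  is_svd X U s V -> is_svd X U' s' V' -> s = s'.
Proof.
move=> [HU HV s0 sS XE] [HU' HV' s0' sS' XE'].
have XX t (W : 'M[R]_n1) (Z : 'M[R]_n2) : W *m W^T = 1%:M -> Z *m Z^T = 1%:M ->
    (W *m rdiag t *m Z^T) *m (W *m rdiag t *m Z^T)^T
    = W *m diag_mx (\row_i (t 0 i * t 0 i)) *m W^T.
  move=> HW HZ; rewrite !trmx_mul trmxK !mulmxA -(mulmxA _ Z^T) (mulmx1C HZ) mulmx1.
  by rewrite -(mulmxA W) rdiag_mulT.
have idx : index_enum 'I_n1 = enum 'I_n1 by rewrite [index_enum _]unlock enumT.
have P (t : 'rV[R]_n1) : \prod_i ('X - ((diag_mx (\row_i (t 0 i * t 0 i))) i i)%:P)
   = \prod_(x <- [seq t 0 i * t 0 i | i <- enum 'I_n1]) ('X - x%:P).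
  by rewrite big_map -idx; apply: eq_bigr => i _; rewrite !mxE eqxx mulr1n.
have := congr1 (fun M => char_poly (M *m M^T)) XE.
rewrite [in X in X -> _]XE' /= XX // XX // !char_poly_orth //.
rewrite !char_poly_trig ?diag_mx_is_trig // !P => /prod_XsubC_eq.
have tr : transitive (fun x y : R => y <= x) by move=> x y z yx zy; exact: le_trans zy yx.
have asym : antisymmetric (fun x y : R => y <= x).
  by move=> x y /andP [yx xy]; apply/le_anti; rewrite yx xy.
have sq (t : 'rV[R]_n1) : (forall i, 0 <= t 0 i) -> (forall i j : 'I_n1, (i <= j)%N -> t 0 j <= t 0 i) ->
    sorted (fun x y : R => y <= x) [seq t 0 i * t 0 i | i <- enum 'I_n1].
  move=> t0 tS; apply: (sorted_row (f := fun i => t 0 i * t 0 i)) => i j ij.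
  by apply: ler_pM => //; apply: tS.
move=> /(sorted_eq tr asym (sq _ s0' sS') (sq _ s0 sS)) /eq_in_map eqs.
apply/matrixP => a i; rewrite ord1.
have := eqs i (mem_enum _ i); rewrite -!expr2 => /eqP.
by rewrite eqrXn2 // => /eqP.
Qed.
End Uniq.


Section Rank.
Variable R : rcfType.

Lemma sorted_k n (s : 'rV[R]_n) : (forall i, 0 <= s 0 i) ->
  (forall i j : 'I_n, (i <= j)%N -> s 0 j <= s 0 i) ->
  exists2 k, (k <= n)%N & forall i : 'I_n, (0 < s 0 i) = (i < k)%N.
Proof.
move=> s0 sS.
have ex : exists j, [forall i : 'I_n, (j <= i)%N ==> (s 0 i == 0)].
  by exists n; apply/forallP => i; rewrite leqNgt ltn_ord.
case: (ex_minnP ex) => k /forallP Pk kmin.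
exists k; first by apply: kmin; apply/forallP => i; rewrite leqNgt ltn_ord.
move=> i; case: (ltnP i k) => ik.
  apply/idP; rewrite lt_def s0 andbT; apply/negP => /eqP si.
  have : (k <= i)%N.
    apply: kmin; apply/forallP => j; apply/implyP => ij.
    by rewrite eq_le s0 andbT -si sS.
  by rewrite leqNgt ik.
by have := Pk i; rewrite ik /= => /eqP ->; rewrite ltxx.
Qed.

Lemma rdiagM n1 n2 p (le : (n1 <= n2)%N) (s : 'rV[R]_n1) (M : 'M[R]_(n2, p)) :
  (rdiag s : 'M[R]_(n1, n2)) *m M = \matrix_(i, j) (s 0 i * M (widen_ord le i) j).
Proof.
apply/matrixP => i j; rewrite !mxE (bigD1 (widen_ord le i)) //= big1 ?addr0.
  by rewrite !mxE eqxx.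
move=> k ki; rewrite !mxE; case: eqP => [ik|]; last by rewrite mul0r.
by exfalso; move/negP: ki; apply; apply/eqP/val_inj; rewrite /= ik.
Qed.

Lemma rank_svd n1 n2 (le : (n1 <= n2)%N) (U : 'M[R]_n1) (s : 'rV[R]_n1) (V : 'M[R]_n2) k :
  U *m U^T = 1%:M -> V *m V^T = 1%:M -> (k <= n1)%N ->
  (forall i, 0 <= s 0 i) -> (forall i : 'I_n1, (0 < s 0 i) = (i < k)%N) ->
  \rank (U *m rdiag s *m V^T) = k.
Proof.
move=> HU HV kn s0 sk.
rewrite mxrankMfree; last by rewrite row_free_unit; apply: ortho_unit; apply: orthoTT.
rewrite -mxrank_tr trmx_mul mxrankMfree; last first.
  by rewrite row_free_unit; apply: ortho_unit; apply: orthoTT.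
rewrite mxrank_tr.
pose s'' : 'rV[R]_n1 := \row_i (if (i < k)%N then s 0 i else 1).
have E1 : (rdiag s : 'M[R]_(n1, n2)) = diag_mx s *m pid_mx n1.
  apply/matrixP => i j; rewrite !mxE (bigD1 i) //= big1 ?addr0.
    by rewrite !mxE eqxx mulr1n ltn_ord andbT; case: eqP; rewrite ?mulr1 ?mulr0.
  by move=> l li; rewrite !mxE eq_sym (negbTE li) mulr0n mul0r.
have E2 : diag_mx s = pid_mx k *m diag_mx s''.
  apply/matrixP => i j; rewrite !mxE (bigD1 i) //= big1 ?addr0.
    rewrite !mxE eqxx /=; case: (ltnP i k) => ik /=; rewrite ?mul1r //.
    rewrite mul0r; have : ~~ (0 < s 0 i) by rewrite sk -leqNgt.
    by rewrite lt_def s0 andbT negbK => /eqP ->; rewrite mul0rn.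
  by move=> l; rewrite -val_eqE /= eq_sym => /negbTE li; rewrite !mxE li /= mul0r.
rewrite E1 E2 mxrankMfree; last by rewrite /row_free rank_pid_mx.
rewrite mxrankMfree ?rank_pid_mx // row_free_unit unitmxE det_diag unitfE.
rewrite prodf_seq_neq0; apply/allP => i _; rewrite mxE.
case: ifP => ik; last by rewrite oner_eq0.
by rewrite gt_eqF // sk ik.
Qed.

Lemma trinner_svd n1 n2 (le : (n1 <= n2)%N) (P : 'M[R]_n1) (t : 'rV[R]_n1)
  (Q : 'M[R]_n2) (U : 'M[R]_n1) (s : 'rV[R]_n1) (V : 'M[R]_n2) :
  trinner (P *m rdiag t *m Q^T) (U *m rdiag s *m V^T) =
  \sum_i \sum_j (P^T *m U) i j * (s 0 j * (t 0 i *
      (Q^T *m V) (widen_ord le i) (widen_ord le j))).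
Proof.
rewrite /trinner !trmx_mul !trmxK.
set A := P^T *m U; set B := Q^T *m V; set T := (rdiag t : 'M[R]_(n1, n2));
set S := (rdiag s : 'M[R]_(n1, n2)).
have -> : Q *m (T^T *m P^T) *m (U *m S *m V^T) = Q *m (T^T *m (A *m S *m V^T)).
  by rewrite /A !mulmxA.
rewrite mxtrace_mulC -!mulmxA mxtrace_mulC.
have -> : P^T *m (U *m (S *m (V^T *m Q))) *m T^T = A *m (S *m (B^T *m T^T)).
  by rewrite /B trmx_mul trmxK !mulmxA.
have BT : B^T *m T^T = (T *m B)^T by rewrite [RHS]trmx_mul.
rewrite BT /mxtrace; apply: eq_bigr => i _; rewrite !mxE; apply: eq_bigr => j _.
have := rdiagM le s ((T *m B)^T); move/matrixP/(_ j i); rewrite [in X in X -> _]mxE => ->.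
have := rdiagM le t B; move/matrixP/(_ i (widen_ord le j)); rewrite [in X in X -> _]mxE.
by rewrite !mxE => ->.
Qed.
End Rank.


Section Key.
Variable R : rcfType.

Lemma subsum (I : finType) (P : pred I) (F : I -> R) :
  (forall i, 0 <= F i) -> \sum_(i | P i) F i <= \sum_i F i.
Proof.
move=> F0; rewrite [X in _ <= X](bigID P) /= lerDl sumr_ge0 // => i _.
Qed.

Lemma count_pref n k : (k <= n)%N -> \sum_(j < n | (j < k)%N) (1 : R) = k%:R.
Proof.
move=> kn; have := @big_ord_narrow_cond R 0 +%R k n xpredT (fun _ => 1) kn.
by rewrite /= => ->; rewrite sumr_const card_ord.
Qed.

Lemma key_ineq n1 n2 (le : (n1 <= n2)%N) (A : 'M[R]_n1) (B : 'M[R]_n2)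
    (s t : 'rV[R]_n1) k :
  A *m A^T = 1%:M -> B *m B^T = 1%:M ->
  (forall i, 0 <= t 0 i <= 1) -> (forall i, 0 <= s 0 i) ->
  (forall j : 'I_n1, (0 < s 0 j) = (j < k)%N) -> (k <= n1)%N ->
  \sum_j s 0 j = \sum_i \sum_j A i j * (s 0 j * (t 0 i *
      B (widen_ord le i) (widen_ord le j))) ->
  k%:R <= \sum_(i | t 0 i == 1) (1 : R).
Proof.
move=> HA HB t01 s0 sk kn hyp.
set w := widen_ord le.
have HA' := mulmx1C HA; have HB' := mulmx1C HB.
have colA j : \sum_i A i j ^+ 2 = 1.
  have /matrixP /(_ j j) := HA'; rewrite !mxE eqxx mulr1n => <-.
  by apply: eq_bigr => i _; rewrite mxE expr2.
have rowA i : \sum_j A i j ^+ 2 = 1.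
  have /matrixP /(_ i i) := HA; rewrite !mxE eqxx mulr1n => <-.
  by apply: eq_bigr => j _; rewrite mxE expr2.
have colB j : \sum_i B (w i) (w j) ^+ 2 <= 1.
  have /matrixP /(_ (w j) (w j)) := HB'; rewrite !mxE eqxx mulr1n.
  have -> : \sum_a B^T (w j) a * B a (w j) = \sum_a B a (w j) ^+ 2.
    by apply: eq_bigr => a _; rewrite mxE expr2.
  move=> <-.
  have := @big_ord_narrow_cond R 0 +%R n1 n2 xpredT
     (fun a => B a (w j) ^+ 2) le.
  rewrite /= -/w => <-; apply: subsum => a; exact: sqr_ge0.
pose c j := \sum_i t 0 i * A i j * B (w i) (w j).
have hyp2 : \sum_j s 0 j * (1 - c j) = 0.
  have -> : \sum_j s 0 j * (1 - c j) = \sum_j s 0 j - \sum_j s 0 j * c j.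
    by rewrite -sumrB; apply: eq_bigr => j _; ring.
  rewrite hyp exchange_big /=; apply/eqP; rewrite subr_eq0; apply/eqP.
  apply: eq_bigr => j _; rewrite /c mulr_sumr; apply: eq_bigr => i _; ring.
have ineq j : \sum_i (1 - t 0 i) * A i j ^+ 2 <= 2 * (1 - c j).
  apply: (@le_trans _ _ (\sum_i (A i j ^+ 2 + B (w i) (w j) ^+ 2
                                   - 2 * (t 0 i * A i j * B (w i) (w j))))).
    apply: ler_sum => i _; have /andP [t0 t1] := t01 i.
    set a := A i j; set b := B (w i) (w j); set x := t 0 i.
    have h1 : 0 <= x * (a - b) ^+ 2 by rewrite mulr_ge0 ?sqr_ge0.
    have h2 : 0 <= (1 - x) * b ^+ 2 by rewrite mulr_ge0 ?sqr_ge0 // subr_ge0.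
    rewrite -subr_ge0; have -> : a ^+ 2 + b ^+ 2 - 2 * (x * a * b) - (1 - x) * a ^+ 2
       = x * (a - b) ^+ 2 + (1 - x) * b ^+ 2 by ring.
    by rewrite addr_ge0.
  rewrite sumrB big_split /= colA -mulr_sumr -/(c j).
  have := colB j; lra.
have cj0 j : 0 <= 1 - c j.
  have : 0 <= \sum_i (1 - t 0 i) * A i j ^+ 2.
    apply: sumr_ge0 => i _; have /andP [_ t1] := t01 i.
    by rewrite mulr_ge0 ?sqr_ge0 // subr_ge0.
  have := ineq j; lra.
have zero j : 0 < s 0 j -> forall i, t 0 i != 1 -> A i j = 0.
  move=> sj i ti.
  have e : s 0 j * (1 - c j) = 0.
    move/eqP: hyp2; rewrite psumr_eq0 => [/allP /(_ j (mem_index_enum _))|l _].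
      by move/implyP/(_ isT)/eqP.
    by rewrite mulr_ge0.
  have e2 : 1 - c j = 0 by move/eqP: e; rewrite mulf_eq0 gt_eqF //= => /eqP.
  have : \sum_i (1 - t 0 i) * A i j ^+ 2 = 0.
    apply/eqP; rewrite eq_le; have := ineq j; rewrite e2 mulr0 => -> /=.
    apply: sumr_ge0 => l _; have /andP [_ t1] := t01 l.
    by rewrite mulr_ge0 ?sqr_ge0 // subr_ge0.
  move/eqP; rewrite psumr_eq0 => [/allP /(_ i (mem_index_enum _))|l _]; last first.
    have /andP [_ t1] := t01 l.
    by rewrite mulr_ge0 ?sqr_ge0 // subr_ge0.
  move/implyP/(_ isT); rewrite mulf_eq0 subr_eq0 eq_sym (negbTE ti) /= sqrf_eq0.
  by move/eqP.
have -> : k%:R = \sum_(j | 0 < s 0 j) (1 : R).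
  by rewrite -(count_pref kn); apply: eq_bigl => j; rewrite sk.
have -> : \sum_(j | 0 < s 0 j) (1 : R) = \sum_(j | 0 < s 0 j) \sum_(i | t 0 i == 1) A i j ^+ 2.
  apply: eq_bigr => j sj; rewrite -[in LHS](colA j) (bigID (fun i => t 0 i == 1)) /=.
  rewrite [X in _ + X = _]big1 ?addr0 // => i ti.
  by rewrite (zero j sj i ti) expr0n.
rewrite exchange_big /=; apply: ler_sum => i _.
by rewrite -(rowA i); apply: subsum => j; exact: sqr_ge0.
Qed.
End Key.


Section Main.
Variable R : rcfType.

Lemma foldr_eadd (I : eqType) (r : seq I) (h : I -> ereal R) (g : I -> R) :
  (forall i, h i = Some (g i)) ->
  foldr eadd (Some 0) [seq h i | i <- r] = Some (\sum_(i <- r) g i).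
Proof.
move=> hg; elim: r => [|i r IH] /=; first by rewrite big_nil.
by rewrite IH hg big_cons.
Qed.

Lemma Q_obj_sum n1 n2 (phi : R -> ereal R) (W : 'M[R]_(n1, n2)) (g : 'I_n1 -> R) :
  (forall i, phi (sigma W 0 i) = Some (g i)) -> Q_obj phi W = Some (\sum_i g i).
Proof.
move=> hg; rewrite /Q_obj (foldr_eadd _ hg).
have idx : index_enum 'I_n1 = enum 'I_n1 by rewrite [index_enum _]unlock enumT.
by rewrite -idx.
Qed.

Lemma phi_fin tstar (phi : R -> ereal R) : in_Phi tstar phi ->
  forall t, 0 <= t <= 1 -> exists2 y, phi t = Some y & 0 <= y.
Proof.
move=> [[_ _ dom _] [_ _ nn _]] t t01.
have [e [e0 He]] := dom t t01.
case E: (phi t) => [y|]; last by exfalso; apply: (He t); rewrite ?subrr ?normr0.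
by exists y => //; have := nn t t01; rewrite E.
Qed.

Lemma LB tstar (phi : R -> ereal R) n1 n2 (le : (n1 <= n2)%N)
    (f : 'M[R]_(n1, n2) -> ereal R) Om delta X W :
  in_Phi tstar phi -> Q_feasible f Om delta X W ->
  exists2 v, Q_obj phi W = Some v & (\rank X)%:R <= v.
Proof.
move=> Hphi [hnuc hspec _ _].
have [U [V [HU HV s0 sS XE]]] := sigma_svd X le.
have [P [Q [HP HQ t0 tS WE]]] := sigma_svd W le.
set s := sigma X in s0 sS XE hnuc *; set t := sigma W in t0 tS WE hspec *.
have t1 i : t 0 i <= 1.
  apply: le_trans hspec; rewrite /specnorm -/t.
  exact: le_bigmax.
have t01 i : 0 <= t 0 i <= 1 by rewrite t0 t1.
have [k kn sk] := sorted_k s0 sS.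
have rk : \rank X = k by rewrite XE; apply: rank_svd.
have key : k%:R <= \sum_(i | t 0 i == 1) (1 : R).
  apply: (@key_ineq _ _ _ le (P^T *m U) (Q^T *m V) s t k) => //.
  - by apply: orthoM => //; apply: orthoTT.
  - by apply: orthoM => //; apply: orthoTT.
  - move/eqP: hnuc; rewrite subr_eq0 => /eqP; rewrite /nucnorm -/s => ->.
    by rewrite WE XE trinner_svd.
pose g i := if phi (t 0 i) is Some y then y else 0.
have hg i : phi (t 0 i) = Some (g i).
  by rewrite /g; have [y -> _] := phi_fin Hphi (t01 i).
have g0 i : 0 <= g i.
  by have [y e y0] := phi_fin Hphi (t01 i); rewrite /g e.
have g1 i : t 0 i == 1 -> g i = 1.
  move/eqP => ti; rewrite /g ti; by case: Hphi => _ [_ _ _ ->].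
exists (\sum_i g i); first exact: Q_obj_sum.
rewrite rk; apply: (le_trans key).
rewrite (eq_bigr g) => [|i /g1 -> //]; exact: subsum.
Qed.

Lemma part1 tstar (phi : R -> ereal R) n1 n2 (le : (n1 <= n2)%N)
    (f : 'M[R]_(n1, n2) -> ereal R) Om delta Xs U V :
  in_Phi tstar phi -> rank_optimal f Om delta Xs ->
  orthogonal_mx U -> orthogonal_mx V -> Xs = U *m rdiag (sigma Xs) *m V^T ->
  Q_optimal phi f Om delta Xs (Wstar U V (\rank Xs) tstar) /\
  Q_obj phi (Wstar U V (\rank Xs) tstar) = Some (\rank Xs)%:R.
Proof.
move=> Hphi [[fX OmX] ropt] HU HV XE.
have [U0 [V0 [_ _ s0 sS _]]] := sigma_svd Xs le.
set s := sigma Xs in s0 sS XE *.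
have [k kn sk] := sorted_k s0 sS.
have rk : \rank Xs = k by rewrite [in LHS]XE; apply: rank_svd.
rewrite rk.
have [_ [/andP [ts0 ts1] phit _ phi1]] := Hphi.
pose w : 'rV[R]_n1 := \row_i (if (i < k)%N then 1 else tstar).
have w0 i : 0 <= w 0 i by rewrite mxE; case: ifP.
have w1 i : w 0 i <= 1 by rewrite mxE; case: ifP => // _; apply: ltW.
have wS (i j : 'I_n1) : (i <= j)%N -> w 0 j <= w 0 i.
  move=> ij; rewrite !mxE; case: ifP => jk; case: ifP => ik //.
  - by move: ik; rewrite (leq_ltn_trans ij jk).
  - exact: ltW.
have WE : Wstar U V k tstar = U *m rdiag w *m V^T by [].
have sigW : sigma (Wstar U V k tstar) = w.
  have [U1 [V1 h1]] := sigma_svd (Wstar U V k tstar) le.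
  have h2 : is_svd (Wstar U V k tstar) U w V by split.
  exact: (svd_unique le h1 h2).
have Qw : Q_obj phi (Wstar U V k tstar) = Some k%:R.
  rewrite (@Q_obj_sum _ _ _ _ (fun i => if (i < k)%N then 1 else 0)).
    by rewrite -big_mkcond /= count_pref.
  by move=> i; rewrite sigW mxE; case: ifP.
have sum1 m (F : 'I_m -> R) i : \sum_j (1%:M : 'M[R]_m) i j * F j = F i.
  rewrite (bigD1 i) //= big1 ?addr0; first by rewrite mxE eqxx mul1r.
  by move=> j ji; rewrite mxE eq_sym (negbTE ji) mul0r.
have feas : Q_feasible f Om delta Xs (Wstar U V k tstar).
  split => //.
  - have -> : trinner (Wstar U V k tstar) Xs = \sum_i s 0 i.
      rewrite {1}XE WE trinner_svd (mulmx1C HU) (mulmx1C HV).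
      apply: eq_bigr => i _; rewrite sum1 [_%:M _ _]mxE eqxx mulr1n mulr1 mxE.
      case: ifP => ik; first by rewrite mulr1.
      have : ~~ (0 < s 0 i) by rewrite sk ik.
      by rewrite lt_def s0 andbT negbK => /eqP ->; rewrite mul0r.
    by rewrite /nucnorm subrr.
  - rewrite /specnorm sigW; apply: bigmax_le => // i _.
split => //; split => // X' W' fe'.
rewrite Qw; have [v -> rv] := LB le Hphi fe'.
have : (k <= \rank X')%N.
  by rewrite -rk; apply: ropt; case: fe' => _ _ ? ?; split.
rewrite /ele -(ler_nat R) => kr; exact: le_trans kr rv.
Qed.
End Main.

Unset Implicit Arguments.

Theorem lemma4p1 (R : rcfType) (n1 n2 : nat) (tstar : R) (phi : R -> ereal R)
  (f : 'M[R]_(n1, n2) -> ereal R) (Om : 'M[R]_(n1, n2) -> Prop) (delta : R) :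
  in_Phi tstar phi ->
  proper_fun f -> lsc_mx f ->
  closed_mx Om ->
  (n1 <= n2)%N ->
  0 < delta ->
  (exists X, rank_optimal f Om delta X) ->
  (forall (Xs : 'M[R]_(n1, n2)) (U : 'M[R]_n1) (V : 'M[R]_n2),
      rank_optimal f Om delta Xs ->
      orthogonal_mx U -> orthogonal_mx V ->
      Xs = U *m rdiag (sigma Xs) *m V^T ->
      Q_optimal phi f Om delta Xs (Wstar U V (\rank Xs) tstar))
  /\
  (forall Xs Ws : 'M[R]_(n1, n2),
      Q_optimal phi f Om delta Xs Ws -> rank_optimal f Om delta Xs).
Proof.
move=> Hphi _ _ _ le _ [X0 ro0].
split.
  by move=> Xs U V ro HU HV XE; case: (part1 le Hphi ro HU HV XE).
move=> Xs Ws [feas opt].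
have [U0 [V0 [HU0 HV0 _ _ XE0]]] := sigma_svd X0 le.
have [[feas0 _] obj0] := part1 le Hphi ro0 HU0 HV0 XE0.
have := opt _ _ feas0; rewrite obj0.
have [v ev rv] := LB le Hphi feas; rewrite ev /= => vr.
have r0 : (\rank Xs <= \rank X0)%N by rewrite -(ler_nat R); exact: le_trans rv vr.
case: feas => _ _ OmX fX; split; first by split.
move=> Y fY; exact: leq_trans r0 (ro0.2 Y fY).
Qed.
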